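(* In Setting (S), for each $0\le i\le \ell-1$, the vertex set of the slice $S_i$, namely $V(G_i)\setminus V(G_{i+1})=H'_{i+1}\setminus(H_1'\cup\cdots\cup H_i')$, is gated in $G$.
   Context: Graphs are finite, simple, connected, undirected; $d$ is shortest-path distance; $I(u,v)=\{x:d(u,x)+d(x,v)=d(u,v)\}$; a graph is median if every triple $x,y,z$ has $|I(x,y)\cap I(y,z)\cap I(z,x)|=1$. A vertex set $H$ is gated if each vertex $v$ has a vertex $g_H(v)\in H$ with $g_H(v)\in I(v,x)$ for all $x\in H$. $\Theta$-classes: classes of the reflexive–transitive closure of the relation on edges ''$uv$ and $xy$ are opposite edges of a 4-cycle''. Deleting a $\Theta$-class $E_i$ of a median graph leaves two components with vertex sets (halfspaces) $H_i',H_i''$. For $u\ne v$, the ladder set $L_{u,v}$ is the set of $\Theta$-classes separating $u$ from $v$ that contain an edge incident to $u$. Setting (S): $(G,\omega)$ is a median graph with $n\ge 3$ vertices and weights $\omega:V(G)\to\mathbb{N}$ such that every $\Theta$-class satisfies $\min\{|H_i'|,|H_i''|\}<n/(2\log n)$ ($\log$ natural); $H_i'$ denotes the smaller (minority) and $H_i''$ the larger (majority) halfspace. $v_0$ is the unique vertex in all majority halfspaces; $u_{\max}$ maximizes $d(v_0,u)+\omega(u)$ (chosen $=v_0$ if possible) and $u_{\max}\ne v_0$ is assumed. $L(G)=L_{v_0,u_{\max}}=\{E_1,\dots,E_\ell\}$. Large sets: $G_0=G$, $G_{i+1}=G[V(G_i)\setminus H'_{i+1}]$. Slices: $S_i=G[V(G_i)\setminus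 V(G_{i+1})]$ for $0\le i\le\ell-1$. *)

(* Defs.v *)
From Stdlib Require Import Reals.
From mathcomp Require Import all_boot.
Set Implicit Arguments.
Unset Strict Implicit.
Unset Printing Implicit Defensive.

Section Graphs.
Variables (T : finType) (e : rel T).

Definition simple_graph : Prop := symmetric e /\ irreflexive e.
Definition connected_graph : Prop := forall u v : T, connect e u v.

Definition walkb (n : nat) (u v : T) : bool :=
  [exists p : n.-tuple T, path e u p && (last u p == v)].

(* shortest-path distance (in a connected graph a shortest walk has length < #|T|) *)
Definition gdist (u v : T) : nat := find (fun n => walkb n u v) (iota 0 #|T|).

Definition interval (u v : T) : {set T} :=
  [set x | gdist u x + gdist x v == gdist u v].

Definition median_graph : Prop :=
  forall x y z : T, #|interval x y :&: interval y z :&: interval z x| = 1.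

Definition gated (H : {set T}) : Prop :=
  forall v : T, exists2 g, g \in H & forall x, x \in H -> g \in interval v x.

Definition is_edge (F : {set T}) : bool :=
  [exists u, exists v, e u v && (F == [set u; v])].

(* E = uv and F = xy are opposite edges of the 4-cycle u-v-y-x-u *)
Definition opp4 (E F : {set T}) : bool :=
  [exists u, exists v, exists x, exists y,
    [&& e u v, e v y, e y x, e x u, u != y, v != x,
        E == [set u; v] & F == [set x; y]]].

Definition theta_of (E : {set T}) : {set {set T}} :=
  [set F | is_edge F & connect opp4 E F].

Definition theta_class (C : {set {set T}}) : bool :=
  [exists E, is_edge E && (C == theta_of E)].

Definition comp (C : {set {set T}}) (x : T) : {set T} :=
  [set y | connect (fun a b => e a b && ([set a; b] \notin C)) x y].

Definition halfspaces (C : {set {set T}}) : {set {set T}} :=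
  [set comp C x | x in T].

Definition ladder (u v : T) (C : {set {set T}}) : bool :=
  [&& theta_class C, v \notin comp C u & [exists y, e u y && ([set u; y] \in C)]].

(* vertex sets of the large sets G_i, for an enumeration Ls = [E_1; ...; E_l]
   and minority-halfspace map Hm:  V(G_0) = V, V(G_{i+1}) = V(G_i) \ H'_{i+1} *)
Fixpoint large_set (Hm : {set {set T}} -> {set T}) (Ls : seq {set {set T}}) (i : nat)
  : {set T} :=
  match i with
  | 0 => setT
  | i'.+1 => large_set Hm Ls i' :\: Hm (nth set0 Ls i')
  end.

Definition slice Hm Ls (i : nat) : {set T} :=
  large_set Hm Ls i :\: large_set Hm Ls i.+1.

End Graphs.

(* Main.v *)
Require Import Defs.
From Stdlib Require Import Reals.
From mathcomp Require Import all_boot.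
From mathcomp Require Import zify.
Set Implicit Arguments.
Unset Strict Implicit.
Unset Printing Implicit Defensive.

Lemma walkbP (T : finType) (e : rel T) n u v :
  reflect (exists p, [/\ size p = n, path e u p & last u p = v]) (walkb e n u v).
Proof.
apply: (iffP existsP) => [[p /andP[hp /eqP hl]] | [p [hs hp hl]]].
  by exists (val p); split => //; exact: size_tuple.
exists (@Tuple n T p (introT eqP hs)); rewrite /= hp hl eqxx.
by [].
Qed.

Lemma walk_short (T : finType) (e : rel T) (Hconn : connected_graph e) u v :
  exists2 n, n < #|T| & walkb e n u v.
Proof.
have : connect e u v := Hconn u v.
move/connectP => [p hp hl].
case: (shortenP hp) hl => p' hp' hu _ hl.
exists (size p'); last by apply/walkbP; exists p'; split => //.
apply: leq_trans (max_card (mem (u :: p'))).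
by rewrite (card_uniqP hu).
Qed.

Lemma gdist_walk (T : finType) (e : rel T) (Hconn : connected_graph e) u v :
  walkb e (gdist e u v) u v /\ gdist e u v < #|T|.
Proof.
have [n hn hw] := walk_short Hconn u v.
have hh : has (fun n => walkb e n u v) (iota 0 #|T|).
  by apply/hasP; exists n => //; rewrite mem_iota.
have := nth_find 0 hh; rewrite has_find size_iota in hh.
by rewrite /gdist nth_iota // add0n => ->.
Qed.

Lemma gdist_min (T : finType) (e : rel T) (Hconn : connected_graph e) k u v :
  walkb e k u v -> gdist e u v <= k.
Proof.
move=> hw; case: (gdist_walk Hconn u v) => _ hlt.
case: (ltnP k #|T|) => hk; last by apply: ltnW; apply: leq_trans hlt hk.
rewrite leqNgt; apply/negP => hlt2.
have := before_find 0 hlt2; rewrite nth_iota // add0n hw.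
by [].
Qed.

Lemma d_refl (T : finType) (e : rel T) (Hconn : connected_graph e) u :
  gdist e u u = 0.
Proof.
apply/eqP; rewrite -leqn0; apply: gdist_min => //.
by apply/walkbP; exists [::].
Qed.

Lemma d_eq0 (T : finType) (e : rel T) (Hconn : connected_graph e) u v :
  gdist e u v = 0 -> u = v.
Proof.
move=> h; case: (gdist_walk Hconn u v); rewrite h => /walkbP [p [hs hp hl]] _.
by case: p hs hp hl.
Qed.

Lemma d_sym (T : finType) (e : rel T) (Hsym : symmetric e) (Hconn : connected_graph e) u v :
  gdist e u v = gdist e v u.
Proof.
have H : forall a b, gdist e b a <= gdist e a b.
  move=> a b; case: (gdist_walk Hconn a b) => /walkbP [p [hs hp hl]] _.
  apply: (gdist_min Hconn); apply/walkbP; exists (rev (belast a p)); split.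
  - by rewrite size_rev size_belast.
  - rewrite -hl rev_path; move: hp; apply: sub_path => x y /=; by rewrite Hsym.
  - have : last a p :: rev (belast a p) = rcons (rev p) a.
      by rewrite -rev_rcons -lastI rev_cons.
    rewrite hl => H0.
    by rewrite -[LHS]/(last a (b :: rev (belast a p))) H0 last_rcons.
by apply/eqP; rewrite eqn_leq !H.
Qed.

Lemma d_tri (T : finType) (e : rel T) (Hconn : connected_graph e) u v w :
  gdist e u w <= gdist e u v + gdist e v w.
Proof.
case: (gdist_walk Hconn u v) => /walkbP [p [hs hp hl]] _.
case: (gdist_walk Hconn v w) => /walkbP [q [hs' hq hl']] _.
apply: (gdist_min Hconn); apply/walkbP; exists (p ++ q); split.
- by rewrite size_cat hs hs'.
- by rewrite cat_path hp hl hq.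
- by rewrite last_cat hl hl'.
Qed.

Lemma d1_e (T : finType) (e : rel T) (Hconn : connected_graph e) u v :
  gdist e u v = 1 -> e u v.
Proof.
move=> h; case: (gdist_walk Hconn u v); rewrite h => /walkbP [p [hs hp hl]] _.
case: p hs hp hl => [|x [|]] //= _; rewrite andbT => ? E.
by rewrite -E.
Qed.

Lemma d_adj (T : finType) (e : rel T) (Hirr : irreflexive e) (Hconn : connected_graph e) u v :
  e u v -> gdist e u v = 1.
Proof.
move=> h; apply/eqP; rewrite eqn_leq; apply/andP; split.
  by apply: (gdist_min Hconn); apply/walkbP; exists [:: v]; rewrite /= h.
rewrite lt0n; apply/negP => /eqP /(d_eq0 Hconn) E; subst v.
by rewrite Hirr in h.
Qed.

Lemma d_step (T : finType) (e : rel T) (Hsym : symmetric e) (Hirr : irreflexive e)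
  (Hconn : connected_graph e) u v :
  0 < gdist e u v -> exists2 w, e u w & gdist e w v = (gdist e u v).-1.
Proof.
move=> h; case: (gdist_walk Hconn u v) => /walkbP [p [hs hp hl]] _.
case: p hs hp hl => [|w p] /=; first by move=> hs; rewrite -hs in h.
move=> hs /andP [huw hp] hl; exists w => //.
have h1 : gdist e w v <= size p by apply: (gdist_min Hconn); apply/walkbP; exists p.
have h2 := d_tri Hconn u w v; rewrite (d_adj Hirr Hconn huw) in h2.
lia.
Qed.

Lemma d_lip (T : finType) (e : rel T) (Hirr : irreflexive e) (Hconn : connected_graph e) u v x :
  e u v -> gdist e u x <= (gdist e v x).+1.
Proof.
move=> h; have := d_tri Hconn u v x; rewrite (d_adj Hirr Hconn h); lia.
Qed.

Lemma med_set (T : finType) (e : rel T) (Hmed : median_graph e) x y z :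
  exists m, interval e x y :&: interval e y z :&: interval e z x = [set m].
Proof. by apply/cards1P; rewrite Hmed. Qed.

Definition medp (T : finType) (e : rel T) x y z m :=
  [/\ gdist e x m + gdist e m y = gdist e x y,
      gdist e y m + gdist e m z = gdist e y z &
      gdist e z m + gdist e m x = gdist e z x].

Lemma medp_in (T : finType) (e : rel T) x y z m :
  medp e x y z m <-> m \in interval e x y :&: interval e y z :&: interval e z x.
Proof.
rewrite !inE; split.
  by case=> -> -> ->; rewrite !eqxx.
by case/andP => /andP [/eqP ? /eqP ?] /eqP ?.
Qed.

Lemma med_ex (T : finType) (e : rel T) (Hmed : median_graph e) x y z :
  exists m, medp e x y z m.
Proof.
have [m hm] := med_set Hmed x y z; exists m; apply/medp_in; by rewrite hm set11.
Qed.

Lemma med_uniq (T : finType) (e : rel T) (Hmed : median_graph e) x y z m1 m2 :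
  medp e x y z m1 -> medp e x y z m2 -> m1 = m2.
Proof.
have [m hm] := med_set Hmed x y z.
by move=> /medp_in; rewrite hm inE => /eqP -> /medp_in; rewrite hm inE => /eqP ->.
Qed.

Lemma d1_cases (T : finType) (e : rel T) (Hconn : connected_graph e) a b m :
  gdist e a m + gdist e m b = 1 -> m = a \/ m = b.
Proof.
case h1: (gdist e a m) => [|k].
  by move=> _; left; symmetry; apply: (d_eq0 Hconn).
case: k h1 => [|k] h1 //= h2; right; apply: (d_eq0 Hconn); lia.
Qed.

Lemma parity (T : finType) (e : rel T) (Hsym : symmetric e) (Hirr : irreflexive e)
  (Hconn : connected_graph e) (Hmed : median_graph e) u v x :
  e u v -> gdist e v x = (gdist e u x).+1 \/ gdist e u x = (gdist e v x).+1.
Proof.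
move=> huv; have [m [h1 h2 h3]] := med_ex Hmed u v x.
have d1 := d_adj Hirr Hconn huv.
rewrite d1 in h1; case: (d1_cases Hconn h1) => E; subst m.
  by left; rewrite -h2 (d_sym Hsym Hconn v u) d1.
right; rewrite (d_sym Hsym Hconn x v) (d_sym Hsym Hconn x u) (d_sym Hsym Hconn v u) d1 in h3; lia.
Qed.

Lemma tri_free (T : finType) (e : rel T) (Hsym : symmetric e) (Hirr : irreflexive e)
  (Hconn : connected_graph e) (Hmed : median_graph e) a b c :
  e a b -> e b c -> e c a -> False.
Proof.
move=> hab hbc hca; have [m [h1 h2 h3]] := med_ex Hmed a b c.
rewrite (d_adj Hirr Hconn hab) in h1; rewrite (d_adj Hirr Hconn hbc) in h2.
rewrite (d_adj Hirr Hconn hca) in h3.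
have nab : a <> b by move=> E; subst; rewrite Hirr in hab.
have nbc : b <> c by move=> E; subst; rewrite Hirr in hbc.
have nca : c <> a by move=> E; subst; rewrite Hirr in hca.
case: (d1_cases Hconn h1); case: (d1_cases Hconn h2); case: (d1_cases Hconn h3);
  congruence.
Qed.

Lemma d2 (T : finType) (e : rel T) (Hsym : symmetric e) (Hirr : irreflexive e)
  (Hconn : connected_graph e) (Hmed : median_graph e) a b c :
  e a c -> e c b -> a != b -> gdist e a b = 2.
Proof.
move=> hac hcb hab.
have h := d_tri Hconn a c b; rewrite (d_adj Hirr Hconn hac) (d_adj Hirr Hconn hcb) in h.
case E: (gdist e a b) h => [|[|[|k]]] // _.
  by move/(d_eq0 Hconn): E => E; rewrite E eqxx in hab.
move/(d1_e Hconn): E => E.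
case: (tri_free Hsym Hirr Hconn Hmed hac hcb); by rewrite Hsym.
Qed.

Lemma noK23 (T : finType) (e : rel T) (Hsym : symmetric e) (Hirr : irreflexive e)
  (Hconn : connected_graph e) (Hmed : median_graph e) a y b x m :
  a != y -> e a b -> e b y -> e a x -> e x y -> e a m -> e m y ->
  b != x -> x != m -> b != m -> False.
Proof.
move=> nay hab hby hax hxy ham hmy nbx nxm nbm.
have S := d_sym Hsym Hconn.
have A := d_adj Hirr Hconn.
have hbx : gdist e b x = 2.
  by apply: (d2 Hsym Hirr Hconn Hmed (c := a)) => //; rewrite Hsym.
have hxm : gdist e x m = 2.
  by apply: (d2 Hsym Hirr Hconn Hmed (c := a)) => //; rewrite Hsym.
have hmb : gdist e m b = 2.
  by apply: (d2 Hsym Hirr Hconn Hmed (c := a)) => //; [rewrite Hsym | rewrite eq_sym].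
have a1 := A a b hab. have a2 := A a x hax. have a3 := A a m ham.
have a4 := A b y hby. have a5 := A x y hxy. have a6 := A m y hmy.
have s1 := S b a. have s2 := S x a. have s3 := S m a.
have s4 := S y b. have s5 := S y x. have s6 := S y m.
have M1 : medp e b x m a.
  by split; rewrite ?s1 ?s2 ?s3 ?a1 ?a2 ?a3 ?hbx ?hxm ?hmb.
have M2 : medp e b x m y.
  by split; rewrite ?s4 ?s5 ?s6 ?a4 ?a5 ?a6 ?hbx ?hxm ?hmb.
by move: (med_uniq Hmed M1 M2) => E; rewrite E eqxx in nay.
Qed.

Definition side (T : finType) (e : rel T) u v w := gdist e w u < gdist e w v.

Lemma parw (T : finType) (e : rel T) (Hsym : symmetric e) (Hirr : irreflexive e)
  (Hconn : connected_graph e) (Hmed : median_graph e) u v w :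
  e u v -> gdist e w v = (gdist e w u).+1 \/ gdist e w u = (gdist e w v).+1.
Proof.
move=> h; rewrite !(d_sym Hsym Hconn w).
case: (parity Hsym Hirr Hconn Hmed w h); auto.
Qed.

Lemma side_swap (T : finType) (e : rel T) (Hsym : symmetric e) (Hirr : irreflexive e)
  (Hconn : connected_graph e) (Hmed : median_graph e) u v w :
  e u v -> side e v u w = ~~ side e u v w.
Proof.
move=> h; rewrite /side; case: (parw Hsym Hirr Hconn Hmed w h) => ->; rewrite ?ltnSn ?leqnn.
  by rewrite ltnNge leqnSn.
by rewrite ltnNge ltnW.
Qed.

Lemma core (T : finType) (e : rel T) (Hsym : symmetric e) (Hirr : irreflexive e)
  (Hconn : connected_graph e) (Hmed : median_graph e) u v a b x y :
  e u v -> e a b -> e b y -> e y x -> e x a -> a != y -> b != x ->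
  side e u v a -> ~~ side e u v b -> ~~ (side e u v x && side e u v y).
Proof.
move=> huv hab hby hyx hxa nay nbx sa sb; apply/negP => /andP [sx sy].
move: sa sb sx sy; rewrite /side -leqNgt => sa sb sx sy.
have P := parw Hsym Hirr Hconn Hmed _ huv.
have L := d_lip Hirr Hconn.
have S := d_sym Hsym Hconn.
have hba : e b a by rewrite Hsym.
have hyb : e y b by rewrite Hsym.
have pa := P a. have pb := P b. have py := P y.
have l1 := L a b u hab. have l2 := L b a u hba. have l3 := L a b v hab. have l4 := L b a v hba.
have l5 := L b y u hby. have l6 := L y b u hyb. have l7 := L b y v hby. have l8 := L y b v hyb.
have hav : gdist e a v = (gdist e a u).+1 by clear -pa sa; lia.
have hbu : gdist e b u = (gdist e a u).+1 by clear -pa pb sa sb l1 l2 l3 l4; lia.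
have hbv : gdist e b v = gdist e a u by clear -pa pb sa sb l1 l2 l3 l4; lia.
have hyu : gdist e y u = gdist e a u by clear -hbu hbv py sy l5 l6 l7 l8; lia.
have hyv : gdist e y v = (gdist e a u).+1 by clear -hbu hbv py sy l5 l6 l7 l8; lia.
clear l1 l2 l3 l4 l5 l6 l7 l8 pb py.
have hay : gdist e a y = 2 by apply: (d2 Hsym Hirr Hconn Hmed hab hby nay).
have [m [m1 m2 m3]] := med_ex Hmed a y u.
rewrite hay hyu (S u m) (S m a) (S u a) (S m y) in m1 m2 m3.
have ham : gdist e a m = 1 by clear -m1 m2 m3; lia.
have hym : gdist e y m = 1 by clear -m1 m2 m3; lia.
have hmu : (gdist e m u).+1 = gdist e a u by clear -m1 m2 m3; lia.
have eam : e a m by apply: (d1_e Hconn).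
have emy : e m y by rewrite Hsym; apply: (d1_e Hconn).
have nbm : b != m by apply/eqP => E; rewrite E in hbu; clear -hbu hmu; lia.
case: (eqVneq x m) => [Exm | nxm]; last first.
  by apply: (noK23 Hsym Hirr Hconn Hmed nay hab hby _ _ eam emy nbx nxm nbm);
    rewrite Hsym.
subst x.
have px := P m.
have hmv : gdist e m v = gdist e a u by clear -px sx hmu; lia.
have hbm : gdist e b m = 2 by apply: (d2 Hsym Hirr Hconn Hmed hba eam nbm).
have [w [w1 w2 w3]] := med_ex Hmed b m v.
rewrite hbm hmv (S v w) (S w b) (S v b) (S w m) hbv in w1 w2 w3.
have hbw : gdist e b w = 1 by clear -w1 w2 w3; lia.
have hmw : gdist e m w = 1 by clear -w1 w2 w3; lia.
have hwv : (gdist e w v).+1 = gdist e a u by clear -w1 w2 w3 hmu; lia.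
have ebw : e b w by apply: (d1_e Hconn).
have ewm : e w m by rewrite Hsym; apply: (d1_e Hconn).
have nyw : y != w by apply/eqP => E; rewrite E in hyv; clear -hyv hwv; lia.
have naw : a != w by apply/eqP => E; rewrite -E in hwv; clear -hav hwv; lia.
by apply: (noK23 Hsym Hirr Hconn Hmed nbm hba _ hby hyx ebw ewm nay nyw naw);
  rewrite Hsym.
Qed.

Lemma set2_cases (T : finType) (a b x y : T) :
  x != y -> [set a; b] = [set x; y] -> (a = x /\ b = y) \/ (a = y /\ b = x).
Proof.
move=> nxy E.
have ha : a \in [set x; y] by rewrite -E set21.
have hb : b \in [set x; y] by rewrite -E set22.
have hx : x \in [set a; b] by rewrite E set21.
have hy : y \in [set a; b] by rewrite E set22.
move: ha hb hx hy; rewrite !inE => /orP [] /eqP ha /orP [] /eqP hb; subst => //.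
- by rewrite eq_sym (negbTE nxy) orbb.
- by auto.
- by auto.
- by rewrite (negbTE nxy) orbb.
Qed.

Definition crossP (T : finType) (e : rel T) u v (F : {set T}) :=
  forall a b, F = [set a; b] -> e a b -> side e u v a != side e u v b.

Lemma cross_step (T : finType) (e : rel T) (Hsym : symmetric e) (Hirr : irreflexive e)
  (Hconn : connected_graph e) (Hmed : median_graph e) u v E F :
  e u v -> opp4 e E F -> crossP e u v E -> crossP e u v F.
Proof.
move=> huv /existsP [u' /existsP [v' /existsP [x /existsP [y H]]]].
move: H => /and4P [hu'v' hv'y hyx /and5P [hxu' nu'y nv'x /eqP HE /eqP HF]] hE.
have hvu : e v u by rewrite Hsym.
have SW := side_swap Hsym Hirr Hconn Hmed _ huv.
have C1 := core Hsym Hirr Hconn Hmed huv.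
have C2 := core Hsym Hirr Hconn Hmed hvu.
have hsxy : side e u v x != side e u v y.
  have := hE u' v' HE hu'v'.
  have hv'u' : e v' u' by rewrite Hsym.
  have hxy : e x y by rewrite Hsym.
  have hu'x : e u' x by rewrite Hsym.
  have hyv' : e y v' by rewrite Hsym.
  case su': (side e u v u'); case sv': (side e u v v') => // _.
    have := C1 _ _ _ _ hu'v' hv'y hyx hxu' nu'y nv'x; rewrite su' sv' => /(_ isT isT).
    have := C2 _ _ _ _ hv'u' hu'x hxy hyv' nv'x nu'y; rewrite !SW su' sv' => /(_ isT isT).
    by case: (side e u v x); case: (side e u v y).
  have := C1 _ _ _ _ hv'u' hu'x hxy hyv' nv'x nu'y; rewrite su' sv' => /(_ isT isT).
  have := C2 _ _ _ _ hu'v' hv'y hyx hxu' nu'y nv'x; rewrite !SW su' sv' => /(_ isT isT).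
  by case: (side e u v x); case: (side e u v y).
move=> a b Hab eab.
have nxy : x != y by apply/eqP => Exy; rewrite Exy Hirr in hyx.
case: (set2_cases nxy (etrans (esym Hab) HF)) => [[-> ->] | [-> ->]] //.
by rewrite eq_sym.
Qed.

Lemma side_uv (T : finType) (e : rel T) (Hirr : irreflexive e) (Hconn : connected_graph e) u v :
  e u v -> side e u v u /\ ~~ side e u v v.
Proof.
move=> h; rewrite /side !(d_refl Hconn) (d_adj Hirr Hconn h); split => //.
Qed.

Lemma cross_conn (T : finType) (e : rel T) (Hsym : symmetric e) (Hirr : irreflexive e)
  (Hconn : connected_graph e) (Hmed : median_graph e) u v F :
  e u v -> connect (opp4 e) [set u; v] F -> crossP e u v F.
Proof.
move=> huv /connectP [p hp ->] {F}.
have base : crossP e u v [set u; v].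
  move=> a b Hab eab.
  have nuv : u != v by apply/eqP => E; rewrite E Hirr in huv.
  case: (side_uv Hirr Hconn huv) => s1 s2.
  case: (set2_cases nuv (esym Hab)) => [[-> ->] | [-> ->]]; by move: s1 s2;
    case: (side e u v u); case: (side e u v v).
elim: p [set u; v] base hp => [|F p IH] E hE //= /andP [hEF hp].
apply: IH hp; exact: (cross_step Hsym Hirr Hconn Hmed huv hEF hE).
Qed.

Lemma opp4_intro (T : finType) (e : rel T) a b c d :
  e a b -> e b d -> e d c -> e c a -> a != d -> b != c ->
  opp4 e [set a; b] [set c; d].
Proof.
move=> h1 h2 h3 h4 h5 h6.
apply/existsP; exists a; apply/existsP; exists b; apply/existsP; exists c;
apply/existsP; exists d.
by rewrite h1 h2 h3 h4 h5 h6 !eqxx.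
Qed.

Lemma conn_cross (T : finType) (e : rel T) (Hsym : symmetric e) (Hirr : irreflexive e)
  (Hconn : connected_graph e) (Hmed : median_graph e) u v :
  e u v -> forall p a b, gdist e a u = p -> e a b -> side e u v a -> ~~ side e u v b ->
  connect (opp4 e) [set u; v] [set a; b].
Proof.
move=> huv; have P := parw Hsym Hirr Hconn Hmed _ huv.
have L := d_lip Hirr Hconn.
have S := d_sym Hsym Hconn.
elim=> [|p IH] a b hp eab sa sb.
  have Ea : a = u by apply: (d_eq0 Hconn).

  subst a.
  move: sb; rewrite /side -leqNgt (S b u) (d_adj Hirr Hconn eab) => sb.
  have pb := P b.
  have hbv : gdist e b v = 0.
    rewrite (S b u) (d_adj Hirr Hconn eab) in pb; clear -sb pb; lia.
  have Eb : b = v by apply: (d_eq0 Hconn).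
  by subst b.
have hpos : 0 < gdist e a u by rewrite hp.
have [a' eaa' ha'] := d_step Hsym Hirr Hconn hpos.
rewrite hp /= in ha'.
move: sa sb; rewrite /side -leqNgt => sa sb.
have ea'a : e a' a by rewrite Hsym.
have eba : e b a by rewrite Hsym.
have pa := P a. have pb := P b. have pa' := P a'.
have l1 := L a b u eab. have l2 := L b a u eba. have l3 := L a b v eab. have l4 := L b a v eba.
have l5 := L a a' v eaa'. have l6 := L a' a v ea'a.
have hav : gdist e a v = p.+2 by clear -pa sa hp; lia.
have hbu : gdist e b u = p.+2 by clear -pa pb sa sb hp l1 l2 l3 l4; lia.
have hbv : gdist e b v = p.+1 by clear -pa pb sa sb hp l1 l2 l3 l4; lia.
have ha'v : gdist e a' v = p.+1 by clear -pa' ha' hav l5 l6; lia.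
clear l1 l2 l3 l4 l5 l6.
have na'b : a' != b by apply/eqP => E; rewrite E in ha'; clear -ha' hbu; lia.
have ha'b : gdist e a' b = 2 by apply: (d2 Hsym Hirr Hconn Hmed ea'a eab na'b).
have [b' [m1 m2 m3]] := med_ex Hmed a' b v.
rewrite ha'b hbv (S v b') (S b' a') (S v a') ha'v (S b' b) in m1 m2 m3.
have hab' : gdist e a' b' = 1 by clear -m1 m2 m3; lia.
have hbb' : gdist e b b' = 1 by clear -m1 m2 m3; lia.
have hb'v : gdist e b' v = p by clear -m1 m2 m3; lia.
have eab' : e a' b' by apply: (d1_e Hconn).
have ebb' : e b b' by apply: (d1_e Hconn).
have eb'b : e b' b by rewrite Hsym.
have pb' := P b'.
have l7 := L b b' u ebb'.
have hb'u : gdist e b' u = p.+1 by clear -pb' hb'v l7 hbu; lia.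
have nb'a : b' != a by apply/eqP => E; rewrite E in hb'v; clear -hb'v hav; lia.
apply: connect_trans (IH a' b' ha' eab' _ _) (connect1 _).
- by rewrite /side ha'v ha'.
- by rewrite /side hb'u hb'v -leqNgt.
by apply: opp4_intro.
Qed.

Lemma theta_mem (T : finType) (e : rel T) (Hsym : symmetric e) (Hirr : irreflexive e)
  (Hconn : connected_graph e) (Hmed : median_graph e) u v a b :
  e u v -> e a b ->
  ([set a; b] \in theta_of e [set u; v]) = (side e u v a != side e u v b).
Proof.
move=> huv eab; rewrite inE.
have ie : is_edge e [set a; b].
  by apply/existsP; exists a; apply/existsP; exists b; rewrite eab eqxx.
rewrite ie /=; apply/idP/idP.
  by move=> /(cross_conn Hsym Hirr Hconn Hmed huv); apply.
case sa: (side e u v a); case sb: (side e u v b) => // _.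
  by apply: (conn_cross Hsym Hirr Hconn Hmed huv erefl eab); rewrite ?sa ?sb.
rewrite [[set a; b]]setUC; have eba : e b a by rewrite Hsym.
by apply: (conn_cross Hsym Hirr Hconn Hmed huv erefl eba); rewrite ?sa ?sb.
Qed.

Definition Rc (T : finType) (e : rel T) (C : {set {set T}}) :=
  fun a b => e a b && ([set a; b] \notin C).

Lemma Rc_sym (T : finType) (e : rel T) (Hsym : symmetric e) C : symmetric (Rc e C).
Proof. by move=> a b; rewrite /Rc Hsym setUC. Qed.

Lemma to_u (T : finType) (e : rel T) (Hsym : symmetric e) (Hirr : irreflexive e)
  (Hconn : connected_graph e) (Hmed : median_graph e) u v :
  e u v -> forall n z, gdist e z u = n -> side e u v z ->
  connect (Rc e (theta_of e [set u; v])) z u.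
Proof.
move=> huv; have P := parw Hsym Hirr Hconn Hmed _ huv.
have L := d_lip Hirr Hconn.
elim=> [|n IH] z hz sz.
  by rewrite (d_eq0 Hconn hz).
have hpos : 0 < gdist e z u by rewrite hz.
have [z' ezz' hz'] := d_step Hsym Hirr Hconn hpos.
rewrite hz /= in hz'.
have pz := P z. have pz' := P z'. have l := L z z' v ezz'.
move: (sz); rewrite /side => sz0.
have sz' : side e u v z' by rewrite /side; clear -pz pz' l hz hz' sz0; lia.
apply: connect_trans (connect1 _) (IH z' hz' sz').
by rewrite /Rc ezz' (theta_mem Hsym Hirr Hconn Hmed huv ezz') sz sz'.
Qed.

Lemma comp_side (T : finType) (e : rel T) (Hsym : symmetric e) (Hirr : irreflexive e)
  (Hconn : connected_graph e) (Hmed : median_graph e) u v w y :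
  e u v -> connect (Rc e (theta_of e [set u; v])) w y = (side e u v w == side e u v y).
Proof.
move=> huv; apply/idP/idP.
  move=> hc.
  have cl : closed (Rc e (theta_of e [set u; v])) [pred z | side e u v z == side e u v w].
    move=> a b /andP [eab]; rewrite (theta_mem Hsym Hirr Hconn Hmed huv eab) negbK => /eqP E.
    by rewrite !inE E.
  by have := closed_connect cl hc; rewrite !inE eqxx eq_sym => <-.
have CS := sym_connect_sym (Rc_sym Hsym (theta_of e [set u; v])).
have hvu : e v u by rewrite Hsym.
have SW := side_swap Hsym Hirr Hconn Hmed _ huv.
case sw: (side e u v w); case sy: (side e u v y) => // _.
  apply: connect_trans (to_u Hsym Hirr Hconn Hmed huv erefl sw) _.
  by rewrite CS; apply: (to_u Hsym Hirr Hconn Hmed huv erefl sy).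
have TV : forall z, side e v u z -> connect (Rc e (theta_of e [set u; v])) z v.
  move=> z hz; rewrite setUC; exact: (to_u Hsym Hirr Hconn Hmed hvu erefl hz).
apply: connect_trans (TV w _) _; first by rewrite SW sw.
by rewrite CS; apply: TV; rewrite SW sy.
Qed.

Lemma opp4_sym (T : finType) (e : rel T) (Hsym : symmetric e) : symmetric (opp4 e).
Proof.
have H : forall E F, opp4 e E F -> opp4 e F E.
  move=> E F /existsP [u' /existsP [v' /existsP [x /existsP [y H]]]].
  move: H => /and4P [hu'v' hv'y hyx /and5P [hxu' nu'y nv'x /eqP -> /eqP ->]].
  apply: opp4_intro; rewrite // 1?Hsym // 1?eq_sym //.
by move=> E F; apply/idP/idP; apply: H.
Qed.

Lemma theta_eq (T : finType) (e : rel T) (Hsym : symmetric e) E E' :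
  connect (opp4 e) E E' -> theta_of e E = theta_of e E'.
Proof.
move=> h; apply/setP => F; rewrite !inE.
by rewrite (same_connect (sym_connect_sym (opp4_sym Hsym)) h).
Qed.

Lemma W_sub (T : finType) (e : rel T) (Hsym : symmetric e) (Hirr : irreflexive e)
  (Hconn : connected_graph e) (Hmed : median_graph e) u v a b w :
  e u v -> e a b -> side e u v a -> ~~ side e u v b -> side e u v w -> side e a b w.
Proof.
move=> huv eab sa sb sw.
have hin : [set a; b] \in theta_of e [set u; v].
  by rewrite (theta_mem Hsym Hirr Hconn Hmed huv eab) sa (negbTE sb).
move: hin; rewrite inE => /andP [_ hc].
have TE := theta_eq Hsym hc.
have := comp_side Hsym Hirr Hconn Hmed a w huv.
rewrite TE (comp_side Hsym Hirr Hconn Hmed a w eab) sa sw.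
by case: (side_uv Hirr Hconn eab) => -> _ /=.
Qed.

Definition convex (T : finType) (e : rel T) (A : {set T}) :=
  forall x y z, x \in A -> y \in A -> z \in interval e x y -> z \in A.

Lemma conv_side_t (T : finType) (e : rel T) (Hsym : symmetric e) (Hirr : irreflexive e)
  (Hconn : connected_graph e) (Hmed : median_graph e) u v :
  e u v -> forall x y, side e u v x -> side e u v y ->
  forall n z, gdist e z y = n -> gdist e x z + gdist e z y = gdist e x y -> side e u v z.
Proof.
move=> huv x y sx sy; elim=> [|n IH] z hz hi.
  by rewrite (d_eq0 Hconn hz).
have hpos : 0 < gdist e z y by rewrite hz.
have [z' ezz' hz'] := d_step Hsym Hirr Hconn hpos.
rewrite hz /= in hz'.
have t1 := d_tri Hconn x z' y.
have t2 := d_tri Hconn x z z'.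
rewrite (d_adj Hirr Hconn ezz') in t2.
have hxz' : gdist e x z' = (gdist e x z).+1 by clear -t1 t2 hi hz hz'; lia.
have sz' : side e u v z' by apply: (IH z' hz'); clear -t1 t2 hi hz hz'; lia.
apply/negPn/negP => sz.
have ez'z : e z' z by rewrite Hsym.
have := W_sub Hsym Hirr Hconn Hmed huv ez'z sz' sz sx.
by rewrite /side hxz' ltnNge leqnSn.
Qed.

Lemma conv_side (T : finType) (e : rel T) (Hsym : symmetric e) (Hirr : irreflexive e)
  (Hconn : connected_graph e) (Hmed : median_graph e) u v bb :
  e u v -> convex e [set w | side e u v w == bb].
Proof.
move=> huv.
have H : forall u v, e u v -> convex e [set w | side e u v w].
  move=> u' v' h x y z; rewrite !inE => sx sy /eqP hi.
  exact: (conv_side_t Hsym Hirr Hconn Hmed h sx sy erefl hi).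
case: bb.
  move=> x y z hx hy hz; have := H u v huv x y z; rewrite !inE !eqb_id in hx hy hz *.
  by apply.
have hvu : e v u by rewrite Hsym.
move=> x y z; rewrite !inE !eqbF_neg -!(side_swap Hsym Hirr Hconn Hmed _ huv).
by move=> hx hy hz; have := H v u hvu x y z; rewrite !inE; apply.
Qed.

Lemma conv_gated (T : finType) (e : rel T) (Hsym : symmetric e)
  (Hconn : connected_graph e) (Hmed : median_graph e) (A : {set T}) g0 :
  convex e A -> g0 \in A -> gated e A.
Proof.
move=> cA hg0 v.
case: (@arg_minnP T g0 (fun g => g \in A) (fun g => gdist e v g) hg0) => g hg hmin.
exists g => // x hx.
have [m [m1 m2 m3]] := med_ex Hmed v g x.
have hm : m \in A by apply: (cA g x m) => //; rewrite inE m2.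
have := hmin m hm => hle.
have hmg : gdist e m g = 0 by clear -m1 hle; lia.
move: (d_eq0 Hconn hmg) => Em; subst m.
have s1 := d_sym Hsym Hconn x g. have s2 := d_sym Hsym Hconn g v.
have s3 := d_sym Hsym Hconn x v.
rewrite inE; apply/eqP; clear -m3 s1 s2 s3; lia.
Qed.

Lemma theta_dec (T : finType) (e : rel T) C :
  theta_class e C -> exists u v, e u v /\ C = theta_of e [set u; v].
Proof.
case/existsP => E /andP [hE /eqP HC].
case/existsP: hE => u /existsP [v /andP [huv /eqP HE]].
by exists u, v; split => //; rewrite HC HE.
Qed.

Lemma comp_eq (T : finType) (e : rel T) (Hsym : symmetric e) (Hirr : irreflexive e)
  (Hconn : connected_graph e) (Hmed : median_graph e) u v x :
  e u v -> Defs.comp e (theta_of e [set u; v]) x = [set y | side e u v y == side e u v x].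
Proof.
move=> huv; apply/setP => y; rewrite !inE eq_sym.
exact: (comp_side Hsym Hirr Hconn Hmed x y huv).
Qed.

Lemma convexI (T : finType) (e : rel T) (A B : {set T}) :
  convex e A -> convex e B -> convex e (A :&: B).
Proof.
move=> cA cB x y z; rewrite [x \in _]inE [y \in _]inE => /andP [xa xb] /andP [ya yb] hz.
by rewrite inE (cA x y z) // (cB x y z).
Qed.

Lemma convexT (T : finType) (e : rel T) : convex e [set: T].
Proof. by move=> x y z; rewrite !inE. Qed.

Lemma theta_same (T : finType) (e : rel T) (Hsym : symmetric e) u v F :
  F \in theta_of e [set u; v] -> theta_of e [set u; v] = theta_of e F.
Proof. by rewrite inE => /andP [_ h]; apply: theta_eq. Qed.

Unset Implicit Arguments.

Theorem mainTheorem8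
  (T : finType) (e : rel T) (omega : T -> nat)
  (Hm : {set {set T}} -> {set T})          (* C |-> minority halfspace H'_C *)
  (v0 umax : T) (Ls : seq {set {set T}})   (* Ls = [:: E_1; ...; E_l] *)
  (Hsimple : simple_graph e) (Hconn : connected_graph e) (Hmed : median_graph e)
  (Hn : 3 <= #|T|)
  (HHm : forall C, theta_class e C ->
     Hm C \in halfspaces e C /\ forall H, H \in halfspaces e C -> #|Hm C| <= #|H|)
  (Hsmall : forall C, theta_class e C ->
     Rlt (INR #|Hm C|) (Rdiv (INR #|T|) (Rmult (INR 2) (ln (INR #|T|)))))
  (Hv0 : forall C, theta_class e C ->
     forall H, H \in halfspaces e C -> H != Hm C -> v0 \in H)
  (Humax : forall u, gdist e v0 u + omega u <= gdist e v0 umax + omega umax)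
  (Hv0_notmax : gdist e v0 v0 + omega v0 < gdist e v0 umax + omega umax)
  (Hneq : umax != v0)
  (HLs_uniq : uniq Ls)
  (HLs : forall C, (C \in Ls) = ladder e v0 umax C) :
  forall i, i < size Ls ->
    slice Hm Ls i = Hm (nth set0 Ls i) :\: \bigcup_(j < i) Hm (nth set0 Ls j)
    /\ gated e (slice Hm Ls i).
Proof.
case: Hsimple => Hsym Hirr.
have HmF : forall C, C \in Ls -> exists u v, [/\ e u v, C = theta_of e [set u; v],
    Hm C = [set w | side e u v w == ~~ side e u v v0] &
    exists2 y, e v0 y & [set v0; y] \in C].
  move=> C; rewrite HLs => /and3P [tc hum /existsP [y /andP [ey hy]]].
  have [u [v [huv HC]]] := theta_dec tc.
  have [hmem _] := HHm C tc.
  move: hmem => /imsetP [x _ HmE].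
  exists u, v; split => //; last by exists y.
  have CE := comp_eq Hsym Hirr Hconn Hmed _ huv.
  rewrite HmE HC CE.
  move: hum; rewrite HC CE inE => hum.
  case E: (side e u v x == side e u v v0).
    exfalso.
    have hH : Defs.comp e C umax \in halfspaces e C by apply: imset_f.
    have hne : Defs.comp e C umax != Hm C.
      apply/negP => /eqP HH.
      have : umax \in Hm C by rewrite -HH inE connect0.
      by rewrite HmE HC CE inE (eqP E) (negbTE hum).
    have := Hv0 C tc _ hH hne; rewrite HC CE inE eq_sym.
    by rewrite (negbTE hum).
  apply/setP => w; rewrite !inE.
  move: E; case: (side e u v x); case: (side e u v v0) => //= _;
    by case: (side e u v w).
move=> i hi.
have L : forall k, large_set Hm Ls k = ~: \bigcup_(j < k) Hm (nth set0 Ls j).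
  elim => [|k IH] /=; first by rewrite big_ord0 setC0.
  by rewrite IH big_ord_recr /= setCU setDE.
have Sl : slice Hm Ls i = Hm (nth set0 Ls i) :\: \bigcup_(j < i) Hm (nth set0 Ls j).
  rewrite /slice !L big_ord_recr /=; apply/setP => w; rewrite !inE.
  by case: (w \in \bigcup_(j < i) Hm (nth set0 Ls j)); case: (w \in Hm (nth set0 Ls i)).
split => //; rewrite Sl.
have CH : forall j, j < size Ls ->
    convex e (Hm (nth set0 Ls j)) /\ convex e (~: Hm (nth set0 Ls j)).
  move=> j hj; have [u [v [huv _ HmE _]]] := HmF _ (mem_nth set0 hj).
  rewrite HmE; split; first exact: conv_side.
  have -> : ~: [set w | side e u v w == ~~ side e u v v0] =
            [set w | side e u v w == side e u v v0].
    by apply/setP => w; rewrite !inE; case: (side e u v w); case: (side e u v v0).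
  exact: conv_side.
have CU : forall k, k <= size Ls -> convex e (~: \bigcup_(j < k) Hm (nth set0 Ls j)).
  elim=> [|k IH] hk; first by rewrite big_ord0 setC0; apply: convexT.
  rewrite big_ord_recr setCU; apply: convexI; first by apply: IH; exact: ltnW.
  exact: (CH k hk).2.
have cS : convex e (Hm (nth set0 Ls i) :\: \bigcup_(j < i) Hm (nth set0 Ls j)).
  by rewrite setDE; apply: convexI; [exact: (CH i hi).1 | exact: CU i (ltnW hi)].
have [u [v [huv HC HmE [y ey hy]]]] := HmF _ (mem_nth set0 hi).
apply: (conv_gated Hsym Hconn Hmed (g0 := y) cS).
rewrite inE; apply/andP; split.
  apply/bigcupP => [[j _ hyj]].
  have hj : j < size Ls by apply: ltn_trans hi.
  have [u' [v' [huv' HC' HmE' _]]] := HmF _ (mem_nth set0 hj).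
  have hy' : [set v0; y] \in nth set0 Ls j.
    rewrite HC' (theta_mem Hsym Hirr Hconn Hmed huv' ey).
    by move: hyj; rewrite HmE' inE; case: (side e u' v' y); case: (side e u' v' v0).
  have Eq : nth set0 Ls j = nth set0 Ls i.
    move: hy' (hy); rewrite HC' HC => hy' hy2.
    by rewrite (theta_same Hsym hy') (theta_same Hsym hy2).
  move/eqP: Eq; rewrite (nth_uniq set0 hj hi HLs_uniq) => /eqP Eji.
  by move: (ltn_ord j); rewrite Eji ltnn.
rewrite HmE inE.
move: hy; rewrite HC (theta_mem Hsym Hirr Hconn Hmed huv ey).
by case: (side e u v y); case: (side e u v v0).
Qed.
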